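(* Let $S\subseteq N$ be a maximal $1$-switchable set. Then for all $a\in S$ and all $b\in N$, ${\rm s}(1,a,b)\in S$; that is, every element of $N$ that differs from an element of $S$ in at most the first component is also in $S$.
   Context: Fix positive integers $n, r_1,\dots,r_n$, let $N=[r_1]\times\cdots\times[r_n]$, and let $R$ be the polynomial ring over a field in the variables $x_a$, $a\in N$. For $a,b\in N$ and $i\in[n]$, ${\rm s}(i,a,b)\in N$ has $i$-th component $b_i$ and other components equal to those of $a$. Let $d(a,b)=\#\{j: a_j\neq b_j\}$ and $f_{i,a,b}=x_ax_b-x_{{\rm s}(i,a,b)}x_{{\rm s}(i,b,a)}$. A subset $S\subseteq N$ is $1$-switchable if for all $a,b\in S$ with $d(a,b)=2$, ${\rm s}(1,a,b)\in S$. Elements $a,b\in S$ are connected in $S$ if there are $a_0=a,\dots,a_k=b$ in $S$ with $d(a_{j-1},a_j)\le 1$ for all $j$. For $1$-switchable $S$: $\tilde{\mathcal{I}}^{\langle 1\rangle}_S=(f_{1,a,b}: a,b \text{ connected in } S)$, $\mathrm{Var}^{\langle 1\rangle}_S=(x_a: a\notin S)$, $P^{\langle 1\rangle}_S=\mathrm{Var}^{\langle 1\rangle}_S+\tilde{\mathcal{I}}^{\langle 1\rangle}_S$. A $1$-switchable $S$ is maximal $1$-switchable if for every $1$-switchable $T$ properly containing $S$, $P^{\langle 1\rangle}_S$ and $P^{\langle 1\rangle}_T$ are incomparable under inclusion. *)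

(* Defs.v *)
From HB Require Import structures.
From mathcomp Require Import all_boot all_order all_algebra.
From mathcomp Require Import mpoly.
Set Implicit Arguments. Unset Strict Implicit. Unset Printing Implicit Defensive.
Import GRing.Theory.
Local Open Scope ring_scope.

Section Defs.
Variables (n : nat) (r : 'I_n -> nat).

(* N = [r_1] x ... x [r_n], components 0-indexed: component j lies in 'I_(r j). *)
Definition Ngrid := {dffun forall j : 'I_n, 'I_(r j)}.

Definition dist (a b : Ngrid) : nat := #|[set j | a j != b j]|.

Definition sw (i : 'I_n) (a b : Ngrid) : Ngrid :=
  [ffun j => if j == i then b j else a j].

Definition switchable (i : 'I_n) (S : {set Ngrid}) : Prop :=
  forall a b, a \in S -> b \in S -> dist a b = 2%N -> sw i a b \in S.

Definition connected_in (S : {set Ngrid}) (a b : Ngrid) : bool :=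
  [&& a \in S, b \in S &
      connect (fun x y => [&& x \in S, y \in S & (dist x y <= 1)%N]) a b].

Variable F : fieldType.
Notation Poly := {mpoly F[#|{: Ngrid}|]}.

Definition xv (a : Ngrid) : Poly := 'X_(enum_rank a).

Definition fbin (i : 'I_n) (a b : Ngrid) : Poly :=
  xv a * xv b - xv (sw i a b) * xv (sw i b a).

Definition in_ideal (G : Poly -> Prop) (p : Poly) : Prop :=
  exists s : seq (Poly * Poly),
    (forall cg, cg \in s -> G cg.2) /\ p = \sum_(cg <- s) cg.1 * cg.2.

(* generators of P^<i>_S = Var_S + I~^<i>_S *)
Definition P_gens (i : 'I_n) (S : {set Ngrid}) (g : Poly) : Prop :=
  (exists a, a \notin S /\ g = xv a) \/
  (exists a b, connected_in S a b /\ g = fbin i a b).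

Definition P_ideal (i : 'I_n) (S : {set Ngrid}) : Poly -> Prop :=
  in_ideal (P_gens i S).

Definition ideal_sub (I J : Poly -> Prop) : Prop := forall p, I p -> J p.

Definition max_switchable (i : 'I_n) (S : {set Ngrid}) : Prop :=
  switchable i S /\
  forall T : {set Ngrid}, switchable i T -> S \proper T ->
    ~ ideal_sub (P_ideal i S) (P_ideal i T) /\
    ~ ideal_sub (P_ideal i T) (P_ideal i S).

End Defs.

(* Main.v *)
Require Import Defs.
From HB Require Import structures.
From mathcomp Require Import all_boot all_order all_algebra.
From mathcomp Require Import mpoly.
Set Implicit Arguments. Unset Strict Implicit. Unset Printing Implicit Defensive.
Import GRing.Theory.
Local Open Scope ring_scope.

Section Aux.
Variables (n : nat) (r : 'I_n -> nat) (F : fieldType).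
Notation N := (Ngrid r).
Notation Poly := {mpoly F[#|{: N}|]}.

Lemma in_ideal_gen (G : Poly -> Prop) g : G g -> in_ideal G g.
Proof.
move=> Gg; exists [:: (1, g)]; split.
  by move=> cg; rewrite inE => /eqP -> .
by rewrite big_cons big_nil mul1r addr0.
Qed.

Lemma in_ideal_add (G : Poly -> Prop) p q :
  in_ideal G p -> in_ideal G q -> in_ideal G (p + q).
Proof.
move=> [s [Hs ->]] [t [Ht ->]]; exists (s ++ t); split.
  by move=> cg; rewrite mem_cat => /orP [/Hs|/Ht].
by rewrite big_cat.
Qed.

Lemma in_ideal_mul (G : Poly -> Prop) c p :
  in_ideal G p -> in_ideal G (c * p).
Proof.
move=> [s [Hs ->]]; exists [seq (c * cg.1, cg.2) | cg <- s]; split.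
  by move=> cg /mapP [x xs ->]; exact: (Hs x xs).
rewrite big_map mulr_sumr; apply: eq_bigr => x _; by rewrite mulrA.
Qed.

Lemma in_ideal_opp (G : Poly -> Prop) p : in_ideal G p -> in_ideal G (- p).
Proof. by move=> H; rewrite -mulN1r; apply: in_ideal_mul. Qed.

Lemma in_ideal_trans (G G' : Poly -> Prop) p :
  (forall g, G' g -> in_ideal G g) -> in_ideal G' p -> in_ideal G p.
Proof.
move=> HG [s [Hs ->]]; elim: s Hs => [|x s IH] Hs.
  by rewrite big_nil; exists [::]; rewrite big_nil.
rewrite big_cons; apply: in_ideal_add.
  by apply: in_ideal_mul; apply: HG; apply: Hs; rewrite inE eqxx.
by apply: IH => cg H; apply: Hs; rewrite inE H orbT.
Qed.

Variable i : 'I_n.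

Lemma swE (a b : N) j : sw i a b j = if j == i then b j else a j.
Proof. by rewrite /sw ffunE. Qed.

Lemma dist_le1 (x y : N) (A : {set 'I_n}) : [set j | x j != y j] \subset A -> (#|A| <= 1)%N -> (dist x y <= 1)%N.
Proof. by move=> sub HA; apply: leq_trans HA; apply: subset_leq_card. Qed.


Lemma swNi (a b : N) j : j != i -> sw i a b j = a j.
Proof. by move=> ji; rewrite swE (negbTE ji). Qed.

Lemma swi (a b : N) : sw i a b i = b i.
Proof. by rewrite swE eqxx. Qed.

Lemma swaa (a : N) : sw i a a = a.
Proof. by apply/ffunP => j; rewrite swE; case: ifP. Qed.

Lemma sw_sw (a b : N) : sw i (sw i a b) (sw i b a) = a.
Proof.
apply/ffunP => j; rewrite !swE; case: (eqVneq j i) => [->|ji] //.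
Qed.

Lemma dist_swl (a b : N) : (dist a (sw i a b) <= 1)%N.
Proof.
apply: (@dist_le1 _ _ [set i]); last by rewrite cards1.
apply/subsetP => j; rewrite !inE swE; case: (eqVneq j i) => // _.
by rewrite eqxx.
Qed.

Lemma dist_swr (a b : N) : (dist (sw i a b) a <= 1)%N.
Proof.
apply: (@dist_le1 _ _ [set i]); last by rewrite cards1.
apply/subsetP => j; rewrite !inE swE; case: (eqVneq j i) => // _.
by rewrite eqxx.
Qed.

Lemma dist_xx (x : N) : dist x x = 0%N.
Proof.
rewrite /dist (_ : [set j | x j != x j] = set0) ?cards0 //.
by apply/setP => j; rewrite !inE eqxx.
Qed.

Definition eR (A : {set N}) : rel N :=
  fun x y => [&& x \in A, y \in A & (dist x y <= 1)%N].

Variable S : {set N}.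
Hypothesis swS : switchable i S.

Lemma step (x y x' y' : N) : x' \in S -> y' \in S -> sw i x' x = x ->
  sw i y' y = y -> (dist x y <= 1)%N -> connect (eR S) x' y'.
Proof.
move=> x'S y'S hx hy hxy.
have agx j : j != i -> x j = x' j by move=> ji; rewrite -hx swNi.
have agy j : j != i -> y j = y' j by move=> ji; rewrite -hy swNi.
case: (leqP (dist x' y') 1) => h.
  by apply: connect1; rewrite /eR x'S y'S h.
set z := sw i x' y'.
have d2 : dist x' y' = 2%N.
  apply/eqP; rewrite eqn_leq h andbT.
  apply: leq_trans (subset_leq_card (B := i |: [set j | x j != y j]) _) _.
    apply/subsetP => j; rewrite !inE; case: (eqVneq j i) => //= ji.
    by rewrite agx // agy.
  rewrite cardsU1; exact: (leq_add (leq_b1 _) hxy).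
have zS : z \in S by apply: swS.
apply: (@connect_trans _ _ z); apply: connect1; rewrite /eR.
  by rewrite x'S zS dist_swl.
rewrite zS y'S /=.
apply: (@dist_le1 _ _ [set j | x j != y j]) => //.
apply/subsetP => j; rewrite !inE /z swE; case: (eqVneq j i) => [->|ji].
  by rewrite eqxx.
by rewrite agx // agy.
Qed.

Definition T := [set c | [exists x in S, sw i x c == c]].

Lemma T_rep c : c \in T -> exists2 x, x \in S & sw i x c = c.
Proof. by rewrite inE => /existsP [x /andP [xS /eqP h]]; exists x. Qed.

Lemma S_sub_T : S \subset T.
Proof. by apply/subsetP => x xS; rewrite inE; apply/existsP; exists x; rewrite xS swaa eqxx. Qed.

Lemma T_sw a b : a \in T -> sw i a b \in T.
Proof.
move=> /T_rep [x xS hx]; rewrite inE; apply/existsP; exists x; rewrite xS /=.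
apply/eqP/ffunP => j; rewrite !swE; case: (eqVneq j i) => // ji.
by rewrite -hx swNi.
Qed.

Lemma pathT x y : connect (eR T) x y -> forall x' y', x' \in S -> y' \in S ->
  sw i x' x = x -> sw i y' y = y -> connect (eR S) x' y'.
Proof.
move/connectP => [p pth ->] {y}; elim: p x pth => [|z p IH] x /= pth x' y' x'S y'S hx hy.
  by apply: (step x'S y'S hx hy); rewrite dist_xx.
move/andP: pth => [exz pth]; move/and3P: exz => [xT zT dxz].
have [z' z'S hz] := T_rep zT.
exact: connect_trans (step x'S z'S hx hz dxz) (IH z pth z' y' z'S y'S hz hy).
Qed.

Lemma var_in c : c \notin S -> in_ideal (P_gens (F:=F) i S) (xv F c).
Proof. by move=> cS; apply: in_ideal_gen; left; exists c. Qed.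

Lemma mon_in c d : (c \notin S) || (d \notin S) ->
  in_ideal (P_gens (F:=F) i S) (xv F c * xv F d).
Proof.
case/orP => h.
  by rewrite mulrC; apply: in_ideal_mul; apply: var_in.
by apply: in_ideal_mul; apply: var_in.
Qed.

Lemma ideal_TS : ideal_sub (P_ideal (F:=F) i T) (P_ideal (F:=F) i S).
Proof.
move=> p; apply: in_ideal_trans => g [[a [aT ->]] | [a [b [cab ->]]]].
  apply: var_in; apply/negP => aS; move/negP: aT; apply.
  exact: (subsetP S_sub_T).
move/and3P: cab => [aT bT conn].
have [/andP [aS bS]|nab] := boolP ((a \in S) && (b \in S)).
  apply: in_ideal_gen; right; exists a, b; split => //.
  by rewrite /connected_in aS bS /=; apply: (pathT conn aS bS); apply: swaa.
set u := sw i a b; set v := sw i b a.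
have uT : u \in T by apply: T_sw.
have vT : v \in T by apply: T_sw.
have [/andP [uS vS]|nuv] := boolP ((u \in S) && (v \in S)).
  have cuv : connect (eR T) u v.
    apply: (@connect_trans _ _ a).
      by apply: connect1; rewrite /eR uT aT dist_swr.
    apply: connect_trans conn _.
    by apply: connect1; rewrite /eR bT vT dist_swl.
  have -> : fbin F i a b = - fbin F i u v by rewrite /fbin sw_sw sw_sw opprB.
  apply: in_ideal_opp; apply: in_ideal_gen; right; exists u, v; split => //.
  by rewrite /connected_in uS vS /=; apply: (pathT cuv uS vS); apply: swaa.
rewrite /fbin -/u -/v; apply: in_ideal_add; first by apply: mon_in; rewrite -negb_and.
by apply: in_ideal_opp; apply: mon_in; rewrite -negb_and.
Qed.

Lemma T_switch : switchable i T.
Proof. by move=> a b aT _ _; apply: T_sw. Qed.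

End Aux.

Theorem lemma4p16 (n : nat) (hn : (0 < n)%N) (r : 'I_n -> nat)
  (hr : forall j, (0 < r j)%N) (F : fieldType) (S : {set Ngrid r}) :
  max_switchable F (Ordinal hn) S ->
  forall a b : Ngrid r, a \in S -> sw (Ordinal hn) a b \in S.
Proof.
move=> [swS maxS] a b aS; apply/negPn/negP => nS.
have prop : S \proper T (Ordinal hn) S.
  apply/properP; split; first exact: S_sub_T.
  by exists (sw (Ordinal hn) a b) => //; apply: T_sw; exact: (subsetP (S_sub_T _ _)).
have [_ H] := maxS _ (@T_switch _ _ _ _) prop.
by apply: H; apply: ideal_TS.
Qed.
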